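(* In the setting where, for $i=1,\dots,n$, $f_i(x_i,\langle u,x_1,\dots,x_{i-1}\rangle)=\tanh(w_i x_i+\beta_i(u,x_1,\dots,x_{i-1}))$ with $w_i\ge0$ and $\beta_i$ continuous, fix $u\in U$, $i\in[n]$, $x_1,\dots,x_i\in\mathbb{R}$, and let $(x_{j,t})_{t\ge0}$ ($j\in[i]$) be defined by $x_{j,0}=x_j$, $x_{j,t}=f_j(x_{j,t-1},\langle u,x_{1,t-1},\dots,x_{j-1,t-1}\rangle)$. Let $x_{j,*}=\lim_{t\to\infty}x_{j,t}$ (which exists for every $j$). Then $x_{i,*}$ is a fixpoint of $h_{i,v}(x)=\tanh(w_i x+v)$, where $v=\beta_1(u)$ if $i=1$ and $v=\beta_i(u,x_{1,*},\dots,x_{i-1,*})$ if $i\ge2$.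
   Context: This concerns the sequence of states of the first $i$ neurons of an $\mathrm{RNC}_+$ (a cascade of recurrent tanh neurons with nonnegative recurrent weights $w_i$ and feedforward-network input functions $\beta_i$) when input $u$ is repeated. *)

(* Defs.v *)
From HB Require Import structures.
From mathcomp Require Import all_boot all_order all_algebra.
From mathcomp Require Import all_classical all_reals all_analysis.
Set Implicit Arguments. Unset Strict Implicit. Unset Printing Implicit Defensive.
Import Order.TTheory GRing.Theory Num.Theory.
Import numFieldNormedType.Exports.
Local Open Scope ring_scope.

Definition tanh {R : realType} (x : R) : R :=
  (expR x - expR (- x)) / (expR x + expR (- x)).

(* Neurons are indexed 0..n-1 (paper's neuron j+1 is our j). *)

Definition rnc_prefix {R : realType} {n : nat} (X : 'rV[R]_n) (j : 'I_n) : 'rV[R]_j :=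
  \row_(k < j) X 0 (widen_ord (ltnW (ltn_ord j)) k).

Definition rnc_step {R : realType} {U : Type} {n : nat} (w : 'I_n -> R)
  (beta : forall j : 'I_n, U -> 'rV[R]_j -> R) (u : U) (X : 'rV[R]_n) : 'rV[R]_n :=
  \row_(j < n) tanh (w j * X 0 j + beta j u (rnc_prefix X j)).

Definition rnc_traj {R : realType} {U : Type} {n : nat} (w : 'I_n -> R)
  (beta : forall j : 'I_n, U -> 'rV[R]_j -> R) (u : U) (x0 : 'rV[R]_n) (t : nat)
  : 'rV[R]_n := iter t (rnc_step w beta u) x0.

Local Open Scope classical_set_scope.
Definition rnc_lim {R : realType} {U : Type} {n : nat} (w : 'I_n -> R)
  (beta : forall j : 'I_n, U -> 'rV[R]_j -> R) (u : U) (x0 : 'rV[R]_n) (j : 'I_n) : R :=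
  lim ((fun t => rnc_traj w beta u x0 t 0 j) @ \oo).

(* Main.v *)
Require Import Defs.
From HB Require Import structures.
From mathcomp Require Import all_boot all_order all_algebra.
From mathcomp Require Import all_classical all_reals all_analysis.
From mathcomp Require Import lra ring.
Import Order.TTheory GRing.Theory Num.Theory.
Import numFieldNormedType.Exports.
Local Open Scope classical_set_scope.
Local Open Scope ring_scope.

Section T.
Variable R : realType.

Lemma tanhE (y : R) : tanh y = 1 - 2 / (expR y ^+ 2 + 1).
Proof.
rewrite /tanh expRN.
have h := expR_gt0 y.
have h1 : expR y ^+ 2 + 1 != 0 by rewrite lt0r_neq0 // addr_gt0 // exprn_gt0.
have h2 : expR y + (expR y)^-1 != 0 by rewrite lt0r_neq0 // addr_gt0 // invr_gt0.
field; rewrite h1 /= lt0r_neq0 //.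
Qed.

Lemma tanh_le (a b : R) : a <= b -> tanh a <= tanh b.
Proof.
move=> ab; rewrite !tanhE lerD2l lerN2 ler_pdivrMr ?addr_gt0 ?exprn_gt0 ?expR_gt0 //.
rewrite mulrAC ler_pdivlMr ?addr_gt0 ?exprn_gt0 ?expR_gt0 //.
rewrite ler_pM2l // lerD2r lerXn2r ?nnegrE ?expR_ge0 //.
by rewrite ler_expR.
Qed.

Lemma tanh_le1 (a : R) : tanh a <= 1.
Proof. by rewrite tanhE lerBlDr lerDl divr_ge0 // addr_ge0 // exprn_ge0 // expR_ge0. Qed.

Lemma tanh_ge1 (a : R) : -1 <= tanh a.
Proof.
rewrite tanhE lerBrDl; have hp : 0 < expR a ^+ 2 + 1 by rewrite addr_gt0 ?exprn_gt0 ?expR_gt0.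
rewrite lerBlDr ler_pdivrMr //.
have : 0 <= expR a ^+ 2 by rewrite exprn_ge0 // expR_ge0.
lra.
Qed.

Lemma tanh_cont : continuous (@tanh R).
Proof.
move=> x; rewrite /tanh.
have hc : continuous (fun y : R => expR (- y)).
  by move=> y; apply: continuous_comp; [apply: opp_continuous|apply: continuous_expR].
apply: cvgM; first by apply: cvgB; [apply: continuous_expR|apply: hc].
apply: cvgV; last by apply: cvgD; [apply: continuous_expR|apply: hc].
by rewrite lt0r_neq0 // addr_gt0 // expR_gt0.
Qed.

Lemma tanh_fix (x y : R) : tanh y = x -> 1 + x = (1 - x) * expR y ^+ 2.
Proof.
move=> <-; rewrite tanhE.
have h1 : expR y ^+ 2 + 1 != 0 by rewrite lt0r_neq0 // addr_gt0 // exprn_gt0 // expR_gt0.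
by field.
Qed.


Lemma no_three (w v m d : R) : d != 0 ->
  tanh (w * (m - d) + v) = m - d -> tanh (w * m + v) = m ->
  tanh (w * (m + d) + v) = m + d -> m = 0.
Proof.
move=> d0 /tanh_fix h1 /tanh_fix h2 /tanh_fix h3.
have E : expR (w * (m - d) + v) * expR (w * (m + d) + v) = expR (w * m + v) ^+ 2.
  by rewrite -expRD expr2 -expRD; congr expR; ring.
have K : (1 + m) ^+ 2 * ((1 - (m - d)) * (1 - (m + d)))
       = (1 - m) ^+ 2 * ((1 + (m - d)) * (1 + (m + d))).
  rewrite h1 h3 h2.
  transitivity ((1 - m) ^+ 2 * ((1 - (m - d)) * (1 - (m + d))) *
     (expR (w * (m - d) + v) * expR (w * (m + d) + v)) ^+ 2); last by ring.
  by rewrite E; ring.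
have F : 4 * m * (d * d) = (1 - m) ^+ 2 * ((1 + (m - d)) * (1 + (m + d)))
   - (1 + m) ^+ 2 * ((1 - (m - d)) * (1 - (m + d))) by ring.
move: F; rewrite K subrr => /eqP.
rewrite !mulf_eq0 (negbTE d0) orbF => /orP[/orP[|]|] /eqP //.
by move=> /eqP; rewrite pnatr_eq0.
Qed.

Lemma nonfix (w v a b : R) : a < b ->
  exists c, a < c /\ c < b /\ tanh (w * c + v) != c.
Proof.
move=> ab; apply/not_existsP => H.
have fx : forall c, a < c -> c < b -> tanh (w * c + v) = c.
  move=> c ac cb; have := H c; move/not_andP => [//|/not_andP [//|]].
  by move/negP; rewrite negbK => /eqP.
set d := (b - a) / 5.
have d0 : 0 < d by rewrite divr_gt0 // subr_gt0.
have p2 : a + 2 * d = 0.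
  apply: (@no_three w v _ d); first by rewrite gt_eqF.
  - by apply: fx; rewrite /d; lra.
  - by apply: fx; rewrite /d; lra.
  - by apply: fx; rewrite /d; lra.
have p3 : a + 3 * d = 0.
  apply: (@no_three w v _ d); first by rewrite gt_eqF.
  - by apply: fx; rewrite /d; lra.
  - by apply: fx; rewrite /d; lra.
  - by apply: fx; rewrite /d; lra.
lra.
Qed.


Section Key.
Variables (w vs : R) (x v : nat -> R).
Hypothesis w0 : 0 <= w.
Hypothesis hv : v @ \oo --> vs.
Hypothesis hx : forall t, x t.+1 = tanh (w * x t + v t).

Lemma cvg_tv c : (fun t => tanh (w * c + v t)) @ \oo --> tanh (w * c + vs).
Proof.
apply: (continuous_cvg _ (tanh_cont _)).
by apply: cvgD; [apply: cvg_cst|exact: hv].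
Qed.

Lemma trap_up c : c < tanh (w * c + vs) ->
  exists T, forall t, (T <= t)%N -> c <= x t -> c <= x t.+1.
Proof.
move=> hc; move: (cvg_tv c) => /cvgr_gt/(_ _ hc) [T _ HT].
exists T => t Tt ct; rewrite hx; apply: (le_trans (ltW (HT t Tt))).
by apply: tanh_le; rewrite lerD2r ler_wpM2l.
Qed.

Lemma trap_down c : tanh (w * c + vs) < c ->
  exists T, forall t, (T <= t)%N -> x t <= c -> x t.+1 <= c.
Proof.
move=> hc; move: (cvg_tv c) => /cvgr_lt/(_ _ hc) [T _ HT].
exists T => t Tt ct; rewrite hx; apply: (le_trans _ (ltW (HT t Tt))).
by apply: tanh_le; rewrite lerD2r ler_wpM2l.
Qed.

Lemma trap_ind (P : nat -> Prop) T t0 : (forall t, (T <= t)%N -> P t -> P t.+1) ->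
  (T <= t0)%N -> P t0 -> forall t, (t0 <= t)%N -> P t.
Proof.
move=> H Tt0 P0 t /subnK <-; elim: (t - t0)%N => [|k IH]; first by rewrite add0n.
by rewrite addSn; apply: H => //; apply: leq_trans Tt0 (leq_addl _ _).
Qed.

Lemma key : exists l, x @ \oo --> l /\ l = tanh (w * l + vs).
Proof.
set S := [set c | exists N, forall t, (N <= t)%N -> c <= x t].
have xb : forall t, -1 <= x t.+1 <= 1.
  by move=> t; rewrite hx tanh_ge1 tanh_le1.
have hS : has_sup S.
  split; first by exists (-1); exists 1%N => -[//|t _]; case/andP: (xb t).
  exists 1 => c [N HN]; apply: (le_trans (HN N.+1 (leqnSn N))).
  by case/andP: (xb N).
set l := sup S.
have lub : forall c, S c -> c <= l by move=> c; apply: sup_upper_bound.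
have up : forall e, 0 < e -> exists N, forall t, (N <= t)%N -> l - e < x t.
  move=> e e0; have [c [N HN] lc] := sup_adherent e0 hS.
  by exists N => t Nt; exact: lt_le_trans lc (HN t Nt).
have lo : forall e, 0 < e -> exists N, forall t, (N <= t)%N -> x t < l + e.
  move=> e e0; apply: contrapT => Hn.
  have fr : forall N, exists t, (N <= t)%N /\ l + e <= x t.
    move=> N; apply: contrapT => H2; apply: Hn; exists N => t Nt.
    rewrite ltNge; apply/negP => le; apply: H2; by exists t.
  have le' : l < l + e by rewrite ltrDl.
  have [c [lc [ce nf]]] := @nonfix w vs _ _ le'.
  case: (ltgtP c (tanh (w * c + vs))) => [cg|cg|ceq]; last first.
  - by rewrite -ceq eqxx in nf.
  - have [T HT] := trap_down _ cg.
    have [t [Tt xt]] : exists t, (T <= t)%N /\ x t <= c.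
      apply: contrapT => H3.
      have : S c.
        exists T => t Tt; apply: ltW; rewrite ltNge; apply/negP => xt.
        by apply: H3; exists t.
      by move/lub; lra.
    have [s [ts xs]] := fr t.
    have := @trap_ind (fun t => x t <= c) _ _ HT Tt xt s ts.
    lra.
  - have [T HT] := trap_up _ cg.
    have [t [Tt xt]] := fr T.
    have : S c.
      exists t; apply: (@trap_ind (fun t => c <= x t) _ _ HT Tt) => //.
      lra.
    by move/lub; lra.
have xl : x @ \oo --> l.
  apply/cvgrPdist_lt => e e0.
  have [N1 H1] := up e e0; have [N2 H2] := lo e e0.
  near=> t.
  have : (maxn N1 N2 <= t)%N by near: t; exists (maxn N1 N2).
  rewrite geq_max => /andP[t1 t2].
  rewrite ltr_distlC; apply/andP; split; [exact: H1|exact: H2].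
exists l; split => //.
have c1 : (fun t => x t.+1) @ \oo --> l by rewrite cvg_shiftS.
have c2 : (fun t => x t.+1) @ \oo --> tanh (w * l + vs).
  under eq_fun do rewrite hx.
  apply: (continuous_cvg _ (tanh_cont _)).
  by apply: cvgD; [apply: cvgM; [apply: cvg_cst|exact: xl]|exact: hv].
exact: (cvg_unique _ c1 c2).
Unshelve. all: by end_near.
Qed.

End Key.
End T.

Lemma pre_cvg (R : realType) j (P : nat -> 'rV[R]_j) (L : 'rV[R]_j) :
  (forall b : 'I_j, (fun t => P t 0 b) @ \oo --> L 0 b) ->
  P @ \oo --> L.
Proof.
move=> H; apply/cvg_mx_entourageP => A entA.
apply: filter_forall => a; apply: filter_forall => b.
have := H b; move/cvg_entourageP/(_ A entA).
rewrite ord1 !near_map; apply: filterS => t /=.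
by rewrite inE.
Qed.

Theorem proposition5 (R : realType) (U : topologicalType) (n : nat)
  (w : 'I_n -> R) (beta : forall j : 'I_n, U -> 'rV[R]_j -> R) :
  (forall j : 'I_n, 0 <= w j) ->
  (forall j : 'I_n, continuous (fun p : U * 'rV[R]_j => beta j p.1 p.2)) ->
  forall (u : U) (i : 'I_n) (x0 : 'rV[R]_n),
    (forall j : 'I_n, (j <= i)%N ->
       cvg ((fun t => rnc_traj w beta u x0 t 0 j) @ \oo)) /\
    rnc_lim w beta u x0 i =
      tanh (w i * rnc_lim w beta u x0 i
            + beta i u (rnc_prefix (\row_(j < n) rnc_lim w beta u x0 j) i)).
Proof.
move=> w0 hc u i x0.
have step : forall t (j : 'I_n), rnc_traj w beta u x0 t.+1 0 j =
   tanh (w j * rnc_traj w beta u x0 t 0 j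
         + beta j u (rnc_prefix (rnc_traj w beta u x0 t) j)).
  by move=> t j; rewrite /rnc_traj iterS /rnc_step mxE.
have fixj : forall j : 'I_n,
  (forall m : 'I_n, (m < j)%N ->
     (fun t => rnc_traj w beta u x0 t 0 m) @ \oo --> rnc_lim w beta u x0 m) ->
  (fun t => rnc_traj w beta u x0 t 0 j) @ \oo --> rnc_lim w beta u x0 j /\
  rnc_lim w beta u x0 j = tanh (w j * rnc_lim w beta u x0 j
     + beta j u (rnc_prefix (\row_(j < n) rnc_lim w beta u x0 j) j)).
  move=> j IH.
  have hp : (fun t => rnc_prefix (rnc_traj w beta u x0 t) j) @ \oo -->
            rnc_prefix (\row_(j < n) rnc_lim w beta u x0 j) j.
    apply: pre_cvg => b; rewrite !mxE.
    have -> : (fun t => rnc_prefix (rnc_traj w beta u x0 t) j 0 b) =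
       (fun t => rnc_traj w beta u x0 t 0 (widen_ord (ltnW (ltn_ord j)) b)).
      by rewrite funeqE => t; rewrite /rnc_prefix mxE.
    by apply: IH; rewrite /=; exact: ltn_ord.
  have hv : (fun t => beta j u (rnc_prefix (rnc_traj w beta u x0 t) j)) @ \oo -->
            beta j u (rnc_prefix (\row_(j < n) rnc_lim w beta u x0 j) j).
    have hpair : (fun t => (u, rnc_prefix (rnc_traj w beta u x0 t) j)) @ \oo -->
                 (u, rnc_prefix (\row_(j < n) rnc_lim w beta u x0 j) j).
      by apply: (cvg_pair (cvg_cst u) hp).
    exact: (continuous_cvg _ (hc j _) hpair).
  have [l [xl ll]] := @key R _ _ _ _ (w0 j) hv (step^~ j).
  have el : rnc_lim w beta u x0 j = l by rewrite /rnc_lim; exact: cvg_lim xl.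
  by rewrite el; split.
have all : forall k (j : 'I_n), (j < k)%N ->
   (fun t => rnc_traj w beta u x0 t 0 j) @ \oo --> rnc_lim w beta u x0 j.
  elim=> [//|k IHk] j; rewrite ltnS leq_eqVlt => /orP[/eqP jk|jk]; last exact: IHk.
  apply: (fixj j _).1 => m mj; apply: IHk; by rewrite -jk.
split.
  by move=> j _; apply/cvg_ex; exists (rnc_lim w beta u x0 j); exact: (all j.+1).
exact: (fixj i (fun m _ => all m.+1 m (ltnSn m))).2.
Qed.
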